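(* Let $b\ge 2$ and let $N$ be a $b$-wMRH number with $k$ base-$b$ digits and with multiplicative extra term $A\ge 1$. Then $k\le A+4$ if $b\ge 6$, and $k\le A+5$ if $2\le b\le 5$.
   Context: Fix a base $b\ge 2$. $s_b(N)$ is the sum of the base-$b$ digits of $N$. For a positive integer $X$, its reversal $X^R$ is the integer whose base-$b$ representation is that of $X$ written in reverse order (leading zeros of the result are dropped). A positive integer $N$ is a $b$-wMRH number if there exists an integer $A\ge 0$, called a multiplicative extra term of $N$, such that $N=(A+s_b(N))\cdot(A+s_b(N))^R$. *)

(* Defs.v *)
From mathcomp Require Import all_boot.
Set Implicit Arguments. Unset Strict Implicit. Unset Printing Implicit Defensive.

(* Base-b digits of n, least significant first; empty list for n = 0.
   Fuel-based recursion; fuel n is always sufficient when b >= 2. *)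
Fixpoint digits_aux (b fuel n : nat) : seq nat :=
  match fuel with
  | 0 => [::]
  | fuel'.+1 => if n == 0 then [::] else (n %% b) :: digits_aux b fuel' (n %/ b)
  end.

Definition digits (b n : nat) : seq nat := digits_aux b n n.

Definition from_digits (b : nat) (s : seq nat) : nat :=
  foldr (fun d acc => d + b * acc) 0 s.

Definition ndigits (b n : nat) : nat := size (digits b n).

Definition digsum (b n : nat) : nat := sumn (digits b n).

(* Reversal: the base-b representation written in reverse order
   (leading zeros of the result are dropped automatically by evaluation). *)
Definition rev_b (b n : nat) : nat := from_digits b (rev (digits b n)).

Definition mult_extra_term (b N A : nat) : Prop :=
  N = (A + digsum b N) * rev_b b (A + digsum b N).

Definition wMRH (b N : nat) : Prop := 0 < N /\ exists A, mult_extra_term b N A.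

(* Main.v *)
Require Import Defs.
From mathcomp Require Import all_boot zify.

Lemma da_all b f n : 0 < b -> all (fun d => d < b) (digits_aux b f n).
Proof.
move=> b0; elim: f n => [|f IH] n //=; case: (n == 0) => //=.
by rewrite ltn_pmod // IH.
Qed.

Lemma da_bounds b f n : 1 < b -> n <= f ->
  n < b ^ size (digits_aux b f n) /\ (0 < n -> b ^ (size (digits_aux b f n)).-1 <= n).
Proof.
move=> b1; elim: f n => [|f IH] n /=.
  by rewrite leqn0 => /eqP ->.
move=> nf; case: eqP => [->//|/eqP n0]; have n0' : 0 < n by lia.
have hq : n %/ b <= f by have := ltn_Pdiv b1 n0'; lia.
have [h1 h2] := IH _ hq.
have hd := divn_eq n b; have hm := ltn_pmod n (ltnW b1).
split; last first.
  move=> _ /=; case: (posnP (n %/ b)) => q0.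
    have -> : digits_aux b f (n %/ b) = [::] by rewrite q0; case: f {IH nf hq h1 h2}.
    by rewrite expn0.
  have := h2 q0; case: (size _) => [|s] /=; first by rewrite expn0.
  rewrite expnS => h; nia.
rewrite /= expnS. nia.
Qed.

Lemma fd_da b f n : 1 < b -> n <= f -> from_digits b (digits_aux b f n) = n.
Proof.
move=> b1; elim: f n => [|f IH] n /=; first by rewrite leqn0 => /eqP ->.
move=> nf; case: eqP => [->//|/eqP n0]; have n0' : 0 < n by lia.
have hq : n %/ b <= f by have := ltn_Pdiv b1 n0'; lia.
rewrite /= IH // {3}(divn_eq n b); lia.
Qed.

Lemma sumn_le b s : all (fun d => d < b) s -> sumn s <= (b - 1) * size s.
Proof. elim: s => //= x s IH /andP[hx hs]; have := IH hs; nia. Qed.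

Lemma fd_lt b s : all (fun d => d < b) s -> from_digits b s < b ^ size s.
Proof.
elim: s => //= x s IH /andP[hx hs]; have := IH hs; rewrite expnS.
rewrite /from_digits /= -/(from_digits b s). nia.
Qed.

Lemma nd_bounds b n : 1 < b -> 0 < n ->
  b ^ (ndigits b n).-1 <= n < b ^ ndigits b n.
Proof.
move=> b1 n0; have [h1 h2] := @da_bounds b n n b1 (leqnn n).
by rewrite /ndigits /digits h1 h2.
Qed.

Lemma ds_le b n : 1 < b -> digsum b n <= (b - 1) * ndigits b n.
Proof. by move=> b1; apply: sumn_le; apply: da_all; lia. Qed.

Lemma rev_lt b n : 1 < b -> rev_b b n < b ^ ndigits b n.
Proof.
move=> b1; rewrite /rev_b /ndigits -(size_rev (digits b n)); apply: fd_lt.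
by rewrite all_rev; apply: da_all; lia.
Qed.

Lemma key b k t M : 1 < b -> b ^ k.-1 < b * M * M -> M <= b * t -> 4 <= k ->
  b ^ (k - 4) < t * t.
Proof.
move=> b1 h hM k4.
have e : b ^ k.-1 = b ^ 3 * b ^ (k - 4) by rewrite -expnD; congr (_ ^ _); lia.
have h2 : b * M * M <= b ^ 3 * (t * t).
  rewrite !expnS expn0; have := leq_mul hM hM; nia.
rewrite -(ltn_pmul2l (_ : 0 < b ^ 3)); last by rewrite expn_gt0; lia.
rewrite -e; exact: leq_trans h h2.
Qed.

Lemma P6 j : (j + 6) * (j + 6) <= 6 ^ (j + 2).
Proof. elim: j => [//|j IH]; rewrite !addSn expnS; set X := _ ^ _ in IH *; nia. Qed.
Lemma P3 j : (j + 5) * (j + 5) <= 3 ^ (j + 3).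
Proof. elim: j => [//|j IH]; rewrite !addSn expnS; set X := _ ^ _ in IH *; nia. Qed.
Lemma P4 j : (j + 6) * (j + 6) <= 4 ^ (j + 3).
Proof. elim: j => [//|j IH]; rewrite !addSn expnS; set X := _ ^ _ in IH *; nia. Qed.
Lemma P2 j : (j + 7) * (j + 7) <= 2 ^ (j + 6).
Proof. elim: j => [//|j IH]; rewrite !addSn expnS; set X := _ ^ _ in IH *; nia. Qed.

Lemma brute : all (fun M => M * rev_b 2 M < 2 ^ ((M + 7)./2 - 1)) (iota 0 13).
Proof. by vm_compute. Qed.

Theorem mainTheorem19 (b N A : nat) :
  2 <= b -> 0 < N -> 1 <= A -> mult_extra_term b N A ->
  (6 <= b -> ndigits b N <= A + 4) /\ (b <= 5 -> ndigits b N <= A + 5).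
Proof.
rewrite /mult_extra_term => b1 N0 A1 hN.
set s := digsum b N in hN; set M := A + s in hN.
set k := ndigits b N.
have hs : s <= (b - 1) * k by apply: ds_le.
have [hk _] := andP (@nd_bounds b N b1 N0).
have M0 : 0 < M by rewrite /M; lia.
have [hm1 hm2] := andP (@nd_bounds b M b1 M0).
have hR := @rev_lt b M b1.
have hbm : b ^ ndigits b M <= b * M.
  move: hm1 hm2; case: (ndigits b M) => [|m] /=; first by rewrite expn0; lia.
  by rewrite expnS => h _; rewrite leq_mul2l h orbT.
have hlt : b ^ k.-1 < b * M * M.
  apply: (leq_ltn_trans hk); rewrite {1}hN.
  have := leq_trans hR hbm; nia.
split.
- move=> b6; rewrite leqNgt; apply/negP => hk5.
  have hMt : M <= b * k by rewrite /M; nia.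
  have := @key b k k M b1 hlt hMt ltac:(lia).
  rewrite leqNgt => /negP; apply.
  have -> : k = (k - 6) + 6 by lia.
  apply: (leq_trans (P6 _)); rewrite (_ : k - 6 + 6 - 4 = k - 6 + 2); last by lia.
  by rewrite leq_exp2r //; lia.
- move=> b5; rewrite leqNgt; apply/negP => hk5.
  case: (ltnP 3 b) => b4.
    have hMt : M <= b * (k - 1) by rewrite /M; nia.
    have := @key b k (k - 1) M b1 hlt hMt ltac:(lia).
    rewrite leqNgt => /negP; apply.
    have -> : k - 1 = (k - 7) + 6 by lia.
    apply: (leq_trans (P4 _)); rewrite (_ : k - 4 = k - 7 + 3); last by lia.
    by rewrite leq_exp2r //; lia.
  case: (ltnP 2 b) => b3.
    have hMt : M <= b * (k - 2) by rewrite /M; nia.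
    have := @key b k (k - 2) M b1 hlt hMt ltac:(lia).
    rewrite leqNgt => /negP; apply.
    have -> : k - 2 = (k - 7) + 5 by lia.
    apply: (leq_trans (P3 _)); rewrite (_ : k - 4 = k - 7 + 3); last by lia.
    by rewrite leq_exp2r //; lia.
  have b2 : b = 2 by lia.
  case: (ltnP k 10) => k10; last first.
    have hMt : M <= b * (k - 3) by rewrite /M; nia.
    have := @key b k (k - 3) M b1 hlt hMt ltac:(lia).
    rewrite leqNgt => /negP; apply.
    have -> : k - 3 = (k - 10) + 7 by lia.
    apply: (leq_trans (P2 _)); rewrite (_ : k - 4 = k - 10 + 6); last by lia.
    by rewrite b2 leqnn.
  have hM12 : M <= 12 by rewrite /M; nia.
  have := allP brute M; rewrite mem_iota /= ltnS hM12 => /(_ isT).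
  move=> hb0; have hb : N < b ^ ((M + 7)./2 - 1) by rewrite {1}hN b2.
  have : b ^ ((M + 7)./2 - 1) <= b ^ k.-1.
    rewrite leq_exp2l //; have : M <= 2 * k - 6 by rewrite /M; nia.
    move=> h; have : (M + 7)./2 <= k.
      rewrite -(leq_pmul2l (_ : 0 < 2)) //; have := odd_double_half (M + 7).
      case: odd => /=; rewrite -muln2; lia.
    lia.
  move=> h; have := leq_trans h hk; lia.
Qed.
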